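(* Let $\overrightarrow{W}$ be a Morse sequence on a simplicial complex $K$. Then for every $p$, $\widehat{\partial}_p\circ\curlywedge_p=\curlywedge_{p-1}\circ\partial_p$ as maps $K[p]\to\widehat W[p-1]$, and $\widehat{\delta}_p\circ\curlyvee_p=\curlyvee_{p+1}\circ\delta_p$ as maps $K[p]\to\widehat W[p+1]$.
   Context: A simplicial complex $K$ is a finite collection of non-empty finite sets closed under taking non-empty subsets; $\dim\sigma=|\sigma|-1$, $K^{(p)}$ the set of $p$-simplices. A pair $(\sigma,\tau)$ with $\sigma\subsetneq\tau$ is a free pair for $K$ if $\tau$ is the only simplex other than $\sigma$ containing $\sigma$; $K$ is then an elementary expansion of $K\setminus\{\sigma,\tau\}$. If $\nu$ is a facet (maximal simplex) of $K$, $K$ is an elementary filling of $K\setminus\{\nu\}$. A Morse sequence on $K$ is a sequence $\langle\emptyset=K_0,\dots,K_k=K\rangle$ with each $K_i$ an elementary expansion or filling of $K_{i-1}$; simplices added by fillings are critical; for an expansion $K_i=K_{i-1}\cup\{\sigma,\tau\}$, $\sigma\subset\tau$, $(\sigma,\tau)$ is a regular pair, $\sigma$ lower regular, $\tau$ upper regular. $\widehat W$ is the set of critical simplices. $K[p]$ is the $\mathbb{Z}_2$-vector space of subsets of $K^{(p)}$ (sum = symmetric difference, $0=\emptyset$; $K[p]=\{0\}$ if $p<0$ or $p>\dim K$), and $\widehat W[p]=\{c\in K[p]:c\subseteq\widehat W\}$. For $\sigma\in K^{(p)}$, $\partial(\sigma)=\{\tau\in K^{(p-1)}:\tau\subset\sigma\}$,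 $\delta(\sigma)=\{\tau\in K^{(p+1)}:\sigma\subset\tau\}$; $\partial_p:K[p]\to K[p-1]$ and $\delta_p:K[p]\to K[p+1]$ are their linear extensions. The reference map $\curlywedge$ is the unique map assigning to each $p$-simplex an element of $\widehat W[p]$, with linear extension $\curlywedge_p:K[p]\to\widehat W[p]$, such that $\curlywedge(\nu)=\{\nu\}$ for critical $\nu$ and $\curlywedge(\tau)=0=\curlywedge(\partial(\tau))$ for upper regular $\tau$; the coreference map $\curlyvee$ (linear extension $\curlyvee_p$) is the unique such map with $\curlyvee(\nu)=\{\nu\}$ for critical $\nu$ and $\curlyvee(\sigma)=0=\curlyvee(\delta(\sigma))$ for lower regular $\sigma$. The linear maps $\widehat\partial_p:\widehat W[p]\to\widehat W[p-1]$ and $\widehat\delta_p:\widehat W[p]\to\widehat W[p+1]$ are defined by $\widehat\partial_p(c)=\curlywedge_{p-1}(\partial_p(c))$ and $\widehat\delta_p(c)=\curlyvee_{p+1}(\delta_p(c))$. *)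

(* Defs.v *)
(* Simplices are finite sets of vertices of a finType V;
   a complex is a {set {set V}}; Z2-chains are {set {set V}} with
   symmetric difference as sum. *)
From mathcomp Require Import all_boot.
Set Implicit Arguments. Unset Strict Implicit. Unset Printing Implicit Defensive.

Section Defs.
Variable V : finType.
Notation simplex := {set V}.
Notation cplx := {set {set V}}.

Definition is_complex (K : cplx) : Prop :=
  set0 \notin K /\
  forall s t : simplex, s \in K -> t != set0 -> t \subset s -> t \in K.

Definition free_pair (K : cplx) (s t : simplex) : Prop :=
  s \proper t /\ s \in K /\ t \in K /\
  forall u, u \in K -> s \subset u -> u = s \/ u = t.

Definition facet (K : cplx) (nu : simplex) : Prop :=
  nu \in K /\ forall u, u \in K -> nu \subset u -> u = nu.

Definition elem_expansion (K' K : cplx) (s t : simplex) : Prop :=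
  is_complex K /\ free_pair K s t /\ K' = K :\: [set s; t].

Definition elem_filling (K' K : cplx) (nu : simplex) : Prop :=
  is_complex K /\ facet K nu /\ K' = K :\ nu.

(* A step of a Morse sequence: a filling adding a critical simplex, or an
   expansion adding a regular pair (sigma, tau). *)
Inductive mstep : Type :=
| Fill of simplex
| Expand of simplex & simplex.

Definition added (w : mstep) : cplx :=
  match w with Fill nu => [set nu] | Expand s t => [set s; t] end.

Definition cplx_of (W : seq mstep) : cplx := \bigcup_(w <- W) added w.

(* W encodes a Morse sequence <K_0 = empty, ..., K_k = K> with
   K_i = cplx_of (take i W). *)
Definition morse_seq (K : cplx) (W : seq mstep) : Prop :=
  cplx_of W = K /\
  forall i, i < size W ->
    match nth (Fill set0) W i with
    | Fill nu => elem_filling (cplx_of (take i W)) (cplx_of (take i.+1 W)) nu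
    | Expand s t => elem_expansion (cplx_of (take i W)) (cplx_of (take i.+1 W)) s t
    end.

Definition crit_of (w : mstep) : cplx :=
  match w with Fill nu => [set nu] | Expand _ _ => set0 end.
Definition lowreg_of (w : mstep) : cplx :=
  match w with Fill _ => set0 | Expand s _ => [set s] end.
Definition upreg_of (w : mstep) : cplx :=
  match w with Fill _ => set0 | Expand _ t => [set t] end.

Definition crit (W : seq mstep) : cplx := \bigcup_(w <- W) crit_of w.
Definition lowreg (W : seq mstep) : cplx := \bigcup_(w <- W) lowreg_of w.
Definition upreg (W : seq mstep) : cplx := \bigcup_(w <- W) upreg_of w.

(* boundary / coboundary of a simplex (faces of dimension one less / more);
   dim s = #|s| - 1 *)
Definition bd (K : cplx) (s : simplex) : cplx :=
  [set t in K | (t \subset s) && (#|t| == #|s|.-1)].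
Definition cobd (K : cplx) (s : simplex) : cplx :=
  [set t in K | (s \subset t) && (#|t| == #|s|.+1)].

(* Z2-linear extension of a map from simplices to chains:
   lin f c = sum (symmetric difference) of f s over s in c *)
Definition lin (f : simplex -> cplx) (c : cplx) : cplx :=
  [set x | odd #|[set s in c | x \in f s]|].

Definition chain (K : cplx) (p : nat) (c : cplx) : Prop :=
  c \subset [set s in K | #|s| == p.+1].

Definition is_reference (K : cplx) (W : seq mstep) (r : simplex -> cplx) : Prop :=
  (forall s, s \in K -> r s \subset [set n in crit W | #|n| == #|s|]) /\
  (forall nu, nu \in crit W -> r nu = [set nu]) /\
  (forall t, t \in upreg W -> r t = set0 /\ lin r (bd K t) = set0).

Definition is_coreference (K : cplx) (W : seq mstep) (c : simplex -> cplx) : Prop :=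
  (forall s, s \in K -> c s \subset [set n in crit W | #|n| == #|s|]) /\
  (forall nu, nu \in crit W -> c nu = [set nu]) /\
  (forall s, s \in lowreg W -> c s = set0 /\ lin c (cobd K s) = set0).

End Defs.

(* Main.v *)
Require Import Defs.
From mathcomp Require Import all_boot zify.
Set Implicit Arguments. Unset Strict Implicit. Unset Printing Implicit Defensive.

Section Lin.
Variable V : finType.
Implicit Types (f g : {set V} -> {set {set V}}) (c : {set {set V}}).

Lemma oddcardE (T : finType) (A : {set T}) (P : pred T) :
  odd #|[set s in A | P s]| = \big[addb/false]_(s in A) P s.
Proof.
rewrite -sum1_card big_mkcond /=.
rewrite (big_morph odd oddD (erefl : odd 0 = false)) [RHS]big_mkcond /=.
by apply: eq_bigr => s _; rewrite !inE; case: (s \in A); case: (P s).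
Qed.

Lemma linE f c x : (x \in lin f c) = \big[addb/false]_(s in c) (x \in f s).
Proof. by rewrite /lin inE oddcardE. Qed.

Lemma addb_andl (I : finType) (A : pred I) (F : I -> bool) b :
  (\big[addb/false]_(i in A) F i) && b = \big[addb/false]_(i in A) (F i && b).
Proof.
elim/big_rec2: _ => //= i y1 y2 _ <-.
by rewrite andb_addl.
Qed.

Lemma lin_comp f g c : lin g (lin f c) = lin (fun s => lin g (f s)) c.
Proof.
apply/setP => x; rewrite !linE big_mkcond /=.
rewrite (eq_bigr (fun u => (\big[addb/false]_(s in c) (u \in f s)) && (x \in g u))); last first.
  by move=> u _; rewrite linE; case: (\big[addb/false]_(s in c) (u \in f s)).
under eq_bigr => u _ do rewrite addb_andl.
rewrite exchange_big /=; apply: eq_bigr => s _.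
by rewrite linE [RHS]big_mkcond /=; apply: eq_bigr => u _; case: (u \in f s).
Qed.

Lemma eq_lin f g c : (forall s, s \in c -> f s = g s) -> lin f c = lin g c.
Proof.
move=> H; apply/setP => x; rewrite !linE; apply: eq_bigr => s hs.
by rewrite H.
Qed.

Lemma lin_set1 f s : lin f [set s] = f s.
Proof. by apply/setP => x; rewrite linE big_set1. Qed.

Lemma lin_set0 f : lin f set0 = set0.
Proof. by apply/setP => x; rewrite linE big_set0 inE. Qed.

Lemma linD1 f c s x : s \in c ->
  (x \in lin f c) = (x \in f s) (+) (x \in lin f (c :\ s)).
Proof.
move=> hs; rewrite !linE (bigD1 s) //=; congr addb.
by apply: eq_bigl => u; rewrite !inE andbC.
Qed.

End Lin.

Section Gen.
Variable V : finType.
Variables (K : {set {set V}}) (D f : {set V} -> {set {set V}}) (m : {set V} -> nat).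
Hypothesis DDz : forall s, s \in K -> lin D (D s) = set0.
Hypothesis cases : forall s, s \in K ->
  f s = [set s] \/ (f s = set0 /\ lin f (D s) = set0) \/
  exists t, [/\ t \in K, s \in D t, lin f (D t) = set0 &
     forall u, u \in D t -> u != s -> u \in K /\ m u < m s].

Lemma gen_main s0 : s0 \in K ->
  lin (fun u => lin f (D u)) (f s0) = lin f (D s0).
Proof.
set h := fun u => lin f (D u).
suff: forall n s, m s < n -> s \in K -> lin h (f s) = h s.
  by move=> H sK; apply: (H (m s0).+1).
elim=> [s //|n IH s ms sK].
case: (cases sK) => [->|[[-> hs]|[t [tK sD ft hu]]]].
- by rewrite lin_set1.
- by rewrite lin_set0 /h hs.
have fsE : f s = lin f (D t :\ s).
  apply/setP => x; move/setP: ft => /(_ x); rewrite (linD1 _ _ sD) in_set0.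
  by case: (x \in f s); case: (x \in lin f (D t :\ s)).
rewrite fsE lin_comp (@eq_lin _ _ h); last first.
  move=> u; rewrite !inE => /andP[us uD]; have [uK mu] := hu u uD us.
  apply: IH => //; lia.
have hD : lin h (D t) = set0 by rewrite /h -lin_comp DDz // lin_set0.
apply/setP => x; move/setP: hD => /(_ x); rewrite (linD1 _ _ sD) in_set0.
by case: (x \in h s); case: (x \in lin h (D t :\ s)).
Qed.
End Gen.

Section Cx.
Variable V : finType.
Variable K : {set {set V}}.
Hypothesis KC : is_complex K.

Lemma card_mid (lo hi : {set V}) : hi \in K -> lo \subset hi -> #|hi| = #|lo| + 2 ->
  #|[set u in K | [&& lo \subset u, u \subset hi & #|u| == #|lo|.+1]]| = 2.
Proof.
move=> hK lohi chi.
have cD : #|hi :\: lo| = 2 by rewrite cardsD (setIidPr lohi); lia.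
suff -> : [set u in K | [&& lo \subset u, u \subset hi & #|u| == #|lo|.+1]] =
          [set a |: lo | a in hi :\: lo].
  rewrite card_in_imset // => a b; rewrite !inE => /andP[al _] /andP[bl _] E.
  have : a \in b |: lo by rewrite -E setU11.
  by case/setU1P => // abs; rewrite abs in al.
apply/setP => u; rewrite !inE; apply/idP/idP.
- case/and4P => uK lou uhi /eqP cu.
  have : #|u :\: lo| == 1 by rewrite cardsD (setIidPr lou) cu; apply/eqP; lia.
  case/cards1P => a ua.
  have au : a \in u :\: lo by rewrite ua set11.
  move: (au); rewrite inE => /andP[anl aiu].
  apply/imsetP; exists a; first by rewrite inE anl (subsetP uhi).
  apply/setP => y; rewrite in_setU1; apply/idP/idP => [yu|].
    case yl: (y \in lo); rewrite ?orbT // orbF.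
    have : y \in u :\: lo by rewrite inE yl yu.
    by rewrite ua inE.
  by case/orP => [/eqP ->|/(subsetP lou)].
- case/imsetP => a; rewrite inE => /andP[anl ahi] ->.
  have sub : a |: lo \subset hi by rewrite subUset sub1set ahi lohi.
  rewrite (proj2 KC hi) //; last by apply/set0Pn; exists a; rewrite setU11.
  by rewrite subsetUr sub cardsU1 anl add1n eqxx.
Qed.

Lemma bdbd s : s \in K -> lin (bd K) (bd K s) = set0.
Proof.
move=> sK; apply/setP => x; rewrite in_set0 /lin inE.
set A := [set _ in _ | _].
case: (set_0Vmem A) => [->|[u0 hu0]]; first by rewrite cards0.
move: (hu0); rewrite !inE => /andP[/and3P[u0K u0s /eqP cu0] /and3P[xK xu0 /eqP cx]].
have xn0 : 0 < #|x|.
  by rewrite card_gt0; apply/negP => /eqP x0; move: (proj1 KC); rewrite -x0 xK.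
have cs : #|s| = #|x| + 2 by lia.
suff -> : A = [set u in K | [&& x \subset u, u \subset s & #|u| == #|x|.+1]].
  by rewrite card_mid // (subset_trans xu0 u0s).
apply/setP => u; rewrite !inE; apply/idP/idP.
- case/andP => /and3P[-> -> /eqP e1] /and3P[_ -> /eqP e2] /=; apply/eqP; lia.
- case/and4P => -> -> -> /eqP e; rewrite xK /=; apply/andP; split; apply/eqP; lia.
Qed.

Lemma cobdcobd s : s \in K -> lin (cobd K) (cobd K s) = set0.
Proof.
move=> sK; apply/setP => x; rewrite in_set0 /lin inE.
set A := [set _ in _ | _].
case: (set_0Vmem A) => [->|[u0 hu0]]; first by rewrite cards0.
move: (hu0); rewrite !inE => /andP[/and3P[u0K u0s /eqP cu0] /and3P[xK xu0 /eqP cx]].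
have cs : #|x| = #|s| + 2 by lia.
suff -> : A = [set u in K | [&& s \subset u, u \subset x & #|u| == #|s|.+1]].
  by rewrite card_mid // (subset_trans u0s xu0).
apply/setP => u; rewrite !inE; apply/idP/idP.
- case/andP => /and3P[-> -> /eqP e1] /and3P[_ -> /eqP e2] /=; apply/eqP; lia.
- case/and4P => -> -> -> /eqP e; rewrite xK /=; apply/andP; split; apply/eqP; lia.
Qed.
End Cx.

Section M.
Variable V : finType.
Variables (K : {set {set V}}) (W : seq (mstep V)).
Hypothesis MS : morse_seq K W.

Lemma mem_bigcup_seq (F : mstep V -> {set {set V}}) l x :
  x \in \bigcup_(w <- l) F w = has (fun w => x \in F w) l.
Proof.
elim: l => [|w l IH]; first by rewrite big_nil inE.
by rewrite big_cons inE IH.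
Qed.

Definition rank (s : {set V}) := find (fun w => s \in added w) W.

Lemma Ki_sub i : cplx_of (take i W) \subset K.
Proof.
apply/subsetP => s; rewrite /cplx_of mem_bigcup_seq -(proj1 MS) /cplx_of mem_bigcup_seq.
by rewrite -[in X in _ -> X](cat_take_drop i W) has_cat => ->.
Qed.

Lemma memKi i s : s \in K -> (s \in cplx_of (take i W)) = (rank s < i).
Proof.
move=> sK; rewrite /cplx_of mem_bigcup_seq has_take //.
by move: sK; rewrite -(proj1 MS) /cplx_of mem_bigcup_seq.
Qed.

Lemma rank_lt s : s \in K -> rank s < size W.
Proof. by move=> sK; move: (sK); rewrite -(proj1 MS) /cplx_of mem_bigcup_seq has_find. Qed.

Lemma rank_added s : s \in K -> s \in added (nth (Fill set0) W (rank s)).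
Proof.
move=> sK; move: (sK); rewrite -(proj1 MS) /cplx_of mem_bigcup_seq => h.
exact: (nth_find _ h).
Qed.

Lemma KC : is_complex K.
Proof.
split.
  apply/negP => s0.
  have := (proj2 MS) _ (rank_lt s0); have := rank_added s0.
  case: nth => [nu|a b] hs [[h _] _];
  by rewrite memKi ?ltnSn in h.
move=> s t sK t0 ts.
have := (proj2 MS) _ (rank_lt sK); have := rank_added sK.
have sK1 : s \in (cplx_of (take (rank s).+1 W)) by rewrite memKi.
case: nth => [nu|a b] hs [[_ h] _];
  by apply: (subsetP (Ki_sub (rank s).+1)); apply: h _ _ sK1 t0 ts.
Qed.

Lemma exp_codim K' K1 (a b : {set V}) : elem_expansion K' K1 a b ->
  a \subset b /\ #|b| = #|a|.+1.
Proof.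
case=> [[K0 KC1] [[ab [aK [bK fr]]] _]].
case/properP: (ab) => asb [x xb xa].
have sub : x |: a \subset b by rewrite subUset sub1set xb asb.
have : x |: a \in K1.
  by apply: (KC1 b) => //; apply/set0Pn; exists x; rewrite setU11.
move/fr => /(_ (subsetUr _ _)) [E|<-].
  by move: xa; rewrite -E setU11.
by rewrite cardsU1 xa subsetUr.
Qed.


Lemma in_W_nth (F : mstep V -> {set {set V}}) i x :
  i < size W -> x \in F (nth (Fill set0) W i) -> x \in \bigcup_(w <- W) F w.
Proof. by move=> iW hx; rewrite mem_bigcup_seq; apply/(has_nthP (Fill set0)); exists i. Qed.

Lemma ref_cases refm : is_reference K W refm -> forall s, s \in K ->
  refm s = [set s] \/ (refm s = set0 /\ lin refm (bd K s) = set0) \/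
  exists t, [/\ t \in K, s \in bd K t, lin refm (bd K t) = set0 &
     forall u, u \in bd K t -> u != s -> u \in K /\ rank u < rank s].
Proof.
move=> [_ [Hc Hu]] s sK.
move: (rank_lt sK) (rank_added sK) ((proj2 MS) _ (rank_lt sK)).
case E: (nth (Fill set0) W (rank s)) => [nu|a b] lt hs st.
  left; apply: Hc; rewrite inE in hs; rewrite (eqP hs).
  by apply: (in_W_nth lt); rewrite E inE.
have [ab cb] := exp_codim st.
have bU : b \in upreg W by apply: (in_W_nth lt); rewrite E inE.
case/set2P: hs => Es; last by subst s; right; left; apply: Hu.
right; right; exists b; subst s.
case: st => [[K0 KC1] [[_ [aK [bK fr]]] Ki]].
split.
- exact: (subsetP (Ki_sub _) _ bK).
- by rewrite inE sK ab cb /=.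
- by case: (Hu b bU).
move=> u; rewrite inE => /and3P[uK ub /eqP cu] ua; split => //.
rewrite -memKi // Ki !inE (negbTE ua) /=.
have -> /= : (u == b) = false by apply/negbTE/negP => /eqP E2; rewrite E2 in cu; lia.
apply: (KC1 b) => //; apply/negP => /eqP u0; rewrite u0 in uK.
by move: (proj1 KC); rewrite uK.
Qed.

Lemma coref_cases corefm : is_coreference K W corefm -> forall s, s \in K ->
  corefm s = [set s] \/ (corefm s = set0 /\ lin corefm (cobd K s) = set0) \/
  exists t, [/\ t \in K, s \in cobd K t, lin corefm (cobd K t) = set0 &
     forall u, u \in cobd K t -> u != s -> u \in K /\ size W - rank u < size W - rank s].
Proof.
move=> [_ [Hc Hl]] s sK.
move: (rank_lt sK) (rank_added sK) ((proj2 MS) _ (rank_lt sK)).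
case E: (nth (Fill set0) W (rank s)) => [nu|a b] lt hs st.
  left; apply: Hc; rewrite inE in hs; rewrite (eqP hs).
  by apply: (in_W_nth lt); rewrite E inE.
have [ab cb] := exp_codim st.
have aL : a \in lowreg W by apply: (in_W_nth lt); rewrite E inE.
case/set2P: hs => Es; first by subst s; right; left; apply: Hl.
right; right; exists a; subst s.
case: st => [[K0 KC1] [[_ [aK [bK fr]]] Ki]].
split.
- exact: (subsetP (Ki_sub _) _ aK).
- by rewrite inE sK ab cb /=.
- by case: (Hl a aL).
move=> u; rewrite inE => /and3P[uK au /eqP cu] ub; split => //.
have ltu := rank_lt uK.
case: (ltnP (rank b) (rank u)) => h; first lia.
have : u \in cplx_of (take (rank b).+1 W) by rewrite memKi.
move/fr => /(_ au) [E2|E2].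
  by rewrite E2 in cu; lia.
by rewrite E2 eqxx in ub.
Qed.

End M.

Theorem theorem4 (V : finType) (K : {set {set V}}) (W : seq (mstep V))
    (refm corefm : {set V} -> {set {set V}}) :
  morse_seq K W -> is_reference K W refm -> is_coreference K W corefm ->
  forall (p : nat) (c : {set {set V}}), chain K p c ->
    lin refm (lin (bd K) (lin refm c)) = lin refm (lin (bd K) c) /\
    lin corefm (lin (cobd K) (lin corefm c)) = lin corefm (lin (cobd K) c).
Proof.
move=> MS Hr Hc p c cK.
have KC0 := KC MS.
have sKc : forall s, s \in c -> s \in K.
  by move=> s sc; move: (subsetP cK s sc); rewrite inE => /andP[].
split; rewrite !lin_comp; apply: eq_lin => s sc.
- exact: (@gen_main V K (bd K) refm (rank W) (bdbd KC0) (ref_cases MS Hr) s (sKc s sc)).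
- exact: (@gen_main V K (cobd K) corefm (fun u => size W - rank W u) (cobdcobd KC0) (coref_cases MS Hc) s (sKc s sc)).
Qed.
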